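(* For $\vec x,\vec y,\vec z,\vec u,\vec v,\vec w\in\Lambda_G$ the following hold in $\kappa G^\#$: (i) $([\vec y,\vec z]\cdot\vec w)(\vec x\cdot\vec u)-([\vec x,\vec z]\cdot\vec w)(\vec y\cdot\vec u)+([\vec x,\vec y]\cdot\vec w)(\vec z\cdot\vec u)-([\vec x,\vec y]\cdot\vec z)(\vec w\cdot\vec u)=0$; (ii) $([\vec x,\vec y]\cdot\vec z)([\vec u,\vec v]\cdot\vec w)=\det\begin{pmatrix}\vec x\cdot\vec u&\vec x\cdot\vec v&\vec x\cdot\vec w\\ \vec y\cdot\vec u&\vec y\cdot\vec v&\vec y\cdot\vec w\\ \vec z\cdot\vec u&\vec z\cdot\vec v&\vec z\cdot\vec w\end{pmatrix}$.
   Context: Let $\kappa$ be a field of characteristic $0$ and $G$ a group. Let $*:\kappa G\to\kappa G$ be the $\kappa$-linear map with $g^*=g^{-1}$, $(\kappa G)^*$ its fixed points, and $A_G$ the quotient of $\kappa G$ by the two-sided ideal generated by all $ab-ba$, $a\in\kappa G$, $b\in(\kappa G)^*$; $*$ descends to $A_G$. Let $\kappa G^\#=\{x\in A_G:x^*=x\}$ (a commutative subring of the centre of $A_G$) and $\Lambda_G=\{x\in A_G:x^*=-x\}$. For $\vec x,\vec y\in\Lambda_G$ define $\vec x\cdot\vec y=-\tfrac12(\vec x\vec y+\vec y\vec x)\in\kappa G^\#$ and $[\vec x,\vec y]=\tfrac12(\vec x\vec y-\vec y\vec x)\in\Lambda_G$. *)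

(* Defs.v *)
From HB Require Import structures.
From mathcomp Require Import all_boot all_order all_algebra.
Set Implicit Arguments. Unset Strict Implicit. Unset Printing Implicit Defensive.
Import GRing.Theory.

(* The group algebra kG is modelled by formal finite linear combinations
   [seq (coefficient, group element)]; two formal combinations denote the
   same element of kG iff they have the same coefficient function [coef].
   The quotient A_G = kG / I is modelled by the congruence [eqA] (difference
   lies in the two-sided ideal I). *)

Section GroupAlgebra.
Variables (K : fieldType) (G : groupType).
Local Open Scope ring_scope.

Definition kG := seq (K * G).

Definition coef (a : kG) (g : G) : K := \sum_(p <- a | p.2 == g) p.1.

Definition kzero : kG := [::].
Definition kadd (a b : kG) : kG := a ++ b.
Definition kscale (k : K) (a : kG) : kG := [seq (k * p.1, p.2) | p <- a].
Definition kopp (a : kG) : kG := kscale (-1) a.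
Definition ksub (a b : kG) : kG := kadd a (kopp b).
Definition kmul (a b : kG) : kG :=
  [seq (p.1 * q.1, (p.2 * q.2)%g) | p <- a, q <- b].
Definition kstar (a : kG) : kG := [seq (p.1, (p.2)^-1%g) | p <- a].

Definition keq (a b : kG) : Prop := forall g, coef a g = coef b g.

Definition selfadj (d : kG) : Prop := keq (kstar d) d.

Definition ksum (s : seq kG) : kG := foldr kadd kzero s.

Definition idgen (q : kG * kG * kG * kG) : kG :=
  let: (a, c, d, b) := q in kmul (kmul a (ksub (kmul c d) (kmul d c))) b.

(* I = two-sided ideal generated by all cd - dc, c in kG, d in (kG)^*:
   finite sums of a (cd - dc) b *)
Definition inI (f : kG) : Prop :=
  exists s : seq (kG * kG * kG * kG),
    (forall q, q \in s -> selfadj q.1.2) /\ keq f (ksum (map idgen s)).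

Definition eqA (a b : kG) : Prop := inI (ksub a b).

Definition inLambda (x : kG) : Prop := eqA (kstar x) (kopp x).

Definition kdot (x y : kG) : kG := kscale (- (1 / 2%:R)) (kadd (kmul x y) (kmul y x)).
Definition kbr (x y : kG) : kG := kscale (1 / 2%:R) (ksub (kmul x y) (kmul y x)).

Definition kdet3 (m11 m12 m13 m21 m22 m23 m31 m32 m33 : kG) : kG :=
  ksum [:: kmul (kmul m11 m22) m33; kmul (kmul m12 m23) m31;
           kmul (kmul m13 m21) m32;
           kopp (kmul (kmul m13 m22) m31); kopp (kmul (kmul m11 m23) m32);
           kopp (kmul (kmul m12 m21) m33)].

End GroupAlgebra.

(* Main.v *)
Require Import Defs.
From HB Require Import structures.
From mathcomp Require Import all_boot all_order all_algebra.
From mathcomp Require Import boolp.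
From mathcomp Require Import ring.
Import GRing.Theory.
Local Open Scope ring_scope.
Set Implicit Arguments. Unset Strict Implicit. Unset Printing Implicit Defensive.

Inductive aexp : Type := AAt of nat | A0 | AAdd of aexp & aexp | AOpp of aexp.

Fixpoint acoef (e : aexp) (n : nat) : int :=
  match e with
  | AAt m => (m == n)%:Z
  | A0 => 0
  | AAdd e1 e2 => acoef e1 n + acoef e2 n
  | AOpp e1 => - acoef e1 n
  end.
Fixpoint amax (e : aexp) : nat :=
  match e with
  | AAt m => m.+1
  | A0 => 0
  | AAdd e1 e2 => maxn (amax e1) (amax e2)
  | AOpp e1 => amax e1
  end.

Section ASolve.
Variables (V : zmodType) (env : seq V).
Fixpoint aden (e : aexp) : V :=
  match e with
  | AAt m => nth 0 env m
  | A0 => 0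
  | AAdd e1 e2 => aden e1 + aden e2
  | AOpp e1 => - aden e1
  end.

Lemma aden_sum e N : (amax e <= N)%N ->
  aden e = \sum_(i < N) (nth 0 env i) *~ acoef e i.
Proof.
elim: e => [m|| e1 IH1 e2 IH2| e1 IH1] /= hN.
- rewrite (bigD1 (Ordinal hN)) //= eqxx mulr1z big1 ?addr0 // => i /negbTE.
  by rewrite -val_eqE /= eq_sym => ->; rewrite mulr0z.
- by rewrite big1 // => i _; rewrite mulr0z.
- rewrite geq_max in hN; case/andP: hN => h1 h2.
  by rewrite IH1 // IH2 // -big_split /=; apply: eq_bigr => i _; rewrite mulrzDr.
- by rewrite IH1 // -sumrN; apply: eq_bigr => i _; rewrite mulrNz.
Qed.

Lemma asolve_ok e1 e2 :
  all (fun i => acoef e1 i == acoef e2 i) (iota 0 (maxn (amax e1) (amax e2))) ->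
  aden e1 = aden e2.
Proof.
move=> /allP H; set N := (maxn (amax e1) (amax e2)).
rewrite (@aden_sum e1 N) ?leq_maxl // (@aden_sum e2 N) ?leq_maxr //.
apply: eq_bigr => i _; congr (_ *~ _); apply/eqP/H.
by rewrite mem_iota /= add0n ltn_ord.
Qed.
End ASolve.

Ltac aidx t l :=
  lazymatch l with
  | (?x :: ?l') => match constr:(tt) with
                   | _ => let _ := constr:(erefl x : x = t) in constr:(0%N)
                   | _ => let n := aidx t l' in constr:(S n)
                   end
  end.

Ltac aatoms t l :=
  lazymatch t with
  | (?a + ?b)%R => let l1 := aatoms a l in aatoms b l1
  | (- ?a)%R => aatoms a l
  | 0%R => l
  | _ => match constr:(tt) with
         | _ => let _ := aidx t l in l
         | _ => constr:(t :: l)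
         end
  end.

Ltac areify t l :=
  lazymatch t with
  | (?a + ?b)%R => let x := areify a l in let y := areify b l in constr:(AAdd x y)
  | (- ?a)%R => let x := areify a l in constr:(AOpp x)
  | 0%R => constr:(A0)
  | _ => let n := aidx t l in constr:(AAt n)
  end.

Ltac asolve :=
  lazymatch goal with
  | |- ?L = ?R =>
    let T := type of L in
    let l0 := aatoms L (@nil T) in
    let l1 := aatoms R l0 in
    let l := eval simpl in l1 in
    let e1 := areify L l in
    let e2 := areify R l in
    change (aden l e1 = aden l e2); apply: asolve_ok; vm_compute; reflexivity
  end.


Section Abstract.
Variables (R : pzRingType) (Lam : R -> Prop) (h : R).
Hypothesis hC : forall r, h * r = r * h.
Hypothesis h2 : h * 2%:R = 1.
Hypothesis HL : forall a b, Lam a -> Lam b -> forall r, (a*b+b*a) * r = r * (a*b+b*a).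
Hypothesis HB : forall a b, Lam a -> Lam b -> Lam (h * (a*b - b*a)).

Implicit Types (a b c d x y z w u v : R).
Definition s a b := locked (a*b + b*a).
Definition cent (c : R) := forall r, c * r = r * c.
Definition br a b := locked (h * (a*b - b*a)).
Definition dot a b := locked (- h * s a b).
Definition T a b c := locked (dot (br a b) c).
Lemma brE a b : br a b = h * (a*b - b*a). Proof. by rewrite /br -lock. Qed.
Lemma dotE a b : dot a b = - h * s a b. Proof. by rewrite /dot -lock. Qed.
Lemma TE a b c : T a b c = dot (br a b) c. Proof. by rewrite /T -lock. Qed.

Lemma cent_h : cent h. Proof. exact: hC. Qed.
Lemma centD c d : cent c -> cent d -> cent (c + d).
Proof. by move=> hc hd r; rewrite mulrDl mulrDr hc hd. Qed.
Lemma centN c : cent c -> cent (- c).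
Proof. by move=> hc r; rewrite mulNr mulrN hc. Qed.
Lemma centM c d : cent c -> cent (c * d) \/ True. Proof. by right. Qed.
Lemma centMM c d : cent c -> cent d -> cent (c * d).
Proof. by move=> hc hd r; rewrite -mulrA hd mulrA hc mulrA. Qed.
Lemma sE a b : s a b = a*b + b*a. Proof. by rewrite /s -lock. Qed.
Lemma cent_s a b : Lam a -> Lam b -> cent (s a b).
Proof. by move=> ha hb r; rewrite sE HL. Qed.
Lemma sC a b : s a b = s b a. Proof. by rewrite !sE addrC. Qed.
Lemma cent_dot a b : Lam a -> Lam b -> cent (dot a b).
Proof. by move=> ha hb; rewrite dotE; apply: centMM; [apply/centN/cent_h|apply: cent_s]. Qed.
Lemma Lam_br a b : Lam a -> Lam b -> Lam (br a b). Proof. by rewrite brE; exact: HB. Qed.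
Lemma cent_T a b c : Lam a -> Lam b -> Lam c -> cent (T a b c).
Proof. by move=> ha hb hc; rewrite TE; apply: cent_dot => //; apply: Lam_br. Qed.

Lemma cmul c x y : cent c -> x * (c * y) = c * (x * y).
Proof. by move=> hc; rewrite mulrA -hc mulrA. Qed.
Lemma halfE x : h * (x + x) = x.
Proof. by rewrite -mulr2n -mulr_natl mulrA h2 mul1r. Qed.

Lemma ac2 a b : a * b = s a b - b * a. Proof. by rewrite sE addrK. Qed.
Lemma acE a b : b * a = s a b - a * b. Proof. by rewrite sE [a*b + _]addrC addrK. Qed.


Lemma K1 a b c : Lam a -> Lam b -> Lam c ->
  a*b*c + c*b*a = s b c * a - s a c * b + s a b * c.
Proof.
move=> ha hb hc.
have e1 : a*b*c = s a b * c - b*(a*c) by rewrite [a*b]ac2 mulrBl mulrA.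
have e2 : b*(a*c) = s a c * b - b*c*a.
  by rewrite [a*c]ac2 mulrBr mulrA (cent_s ha hc).
have e3 : b*c*a = s b c * a - c*b*a by rewrite [b*c]ac2 mulrBl.
rewrite e1 e2 e3 opprB -addrA [_ - c*b*a - _]addrAC subrK addrC.
by rewrite -addrA.
Qed.

Lemma K2 a b c : Lam a -> Lam b -> Lam c ->
  T a b c = - (h * (a*b*c - c*b*a)).
Proof.
move=> ha hb hc.
have e1 : b*a*c = s a b * c - a*b*c by rewrite [b*a]acE mulrBl.
have e2 : c*(a*b) = s a b * c - c*b*a.
  by rewrite [a*b]ac2 mulrBr mulrA -(cent_s ha hb c).
have e : (a*b - b*a)*c + c*(a*b - b*a) = (a*b*c - c*b*a) + (a*b*c - c*b*a).
  rewrite mulrBl mulrBr e1 e2 mulrA opprB [a*b*c + _]addrA !addrA subrK.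
  by rewrite [_ - c*b*a + a*b*c]addrAC.
rewrite TE dotE sE brE (cmul c _ cent_h) -(mulrA h _ c) -mulrDr e halfE mulNr. by [].
Qed.

Lemma K3 a b c : Lam a -> Lam b -> Lam c ->
  a*b*c = h*(s b c * a - s a c * b + s a b * c) - T a b c.
Proof.
move=> ha hb hc.
rewrite K2 // opprK -K1 // -mulrDr addrACA subrr addr0 halfE.
by [].
Qed.

Lemma GG a b c d : Lam a -> Lam b -> Lam c -> Lam d ->
  T b c d * a - T a b c * d =
  h*(s c d*(a*b)) - h*(s b d*(a*c)) + h*(s a c*(b*d)) - h*(s a b*(c*d)).
Proof.
move=> ha hb hc hd.
have E : a*b*c*d = a*(b*c*d) by rewrite !mulrA.
rewrite (K3 ha hb hc) (K3 hb hc hd) in E.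
have L : (h*(s b c * a - s a c * b + s a b * c) - T a b c) * d =
   h*(s b c*(a*d)) - h*(s a c*(b*d)) + h*(s a b*(c*d)) - T a b c * d.
  by rewrite mulrBl -(mulrA h) !mulrDl !mulNr -!mulrA !mulrDr !mulrN.
have Rr : a * (h*(s c d * b - s b d * c + s b c * d) - T b c d) =
   h*(s c d*(a*b)) - h*(s b d*(a*c)) + h*(s b c*(a*d)) - T b c d * a.
  rewrite mulrBr (cmul a _ cent_h) !mulrDr !mulrN.
  rewrite (cmul a _ (cent_s hc hd)) (cmul a _ (cent_s hb hd)) (cmul a _ (cent_s hb hc)).
  by rewrite (cent_T hb hc hd).
rewrite L Rr in E.
have -> : T b c d * a = h*(s c d*(a*b)) - h*(s b d*(a*c)) + h*(s b c*(a*d))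
   - (h*(s b c*(a*d)) - h*(s a c*(b*d)) + h*(s a b*(c*d)) - T a b c * d).
  by rewrite E; asolve.
asolve.
Qed.
Lemma br_swap a b : br b a = - br a b.
Proof. by rewrite !brE -[RHS]mulrN opprB. Qed.
Lemma dotNl p q : dot (- p) q = - dot p q.
Proof.
rewrite !dotE !sE.
have -> : (- p) * q + q * (- p) = - (p * q + q * p) by rewrite mulNr mulrN opprD.
by rewrite mulrN.
Qed.
Lemma dotDl p q r : dot (p + q) r = dot p r + dot q r.
Proof. by rewrite !dotE !sE mulrDl [r * _]mulrDr addrACA mulrDr. Qed.
Lemma dotBl p q r : dot (p - q) r = dot p r - dot q r.
Proof. by rewrite dotDl dotNl. Qed.
Lemma dotC p q : dot p q = dot q p.
Proof. by rewrite !dotE sC. Qed.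
Lemma dot0l q : dot 0 q = 0.
Proof. by rewrite dotE sE mul0r mulr0 addr0 mulr0. Qed.
Lemma dotZl c p q : cent c -> dot (c * p) q = c * dot p q.
Proof.
move=> hc; rewrite !dotE !sE -mulrA (cmul q _ hc) -mulrDr !mulrA.
by rewrite (centN cent_h c).
Qed.
Lemma dotBr p q r : dot r (p - q) = dot r p - dot r q.
Proof. by rewrite !(dotC r) dotBl. Qed.
Lemma dotZr c p q : cent c -> dot q (c * p) = c * dot q p.
Proof. by move=> hc; rewrite !(dotC q) dotZl. Qed.

Lemma T_swap12 a b c : T b a c = - T a b c.
Proof. by rewrite !TE br_swap dotNl. Qed.
Lemma T_rev a b c : Lam a -> Lam b -> Lam c -> T c b a = - T a b c.
Proof. by move=> ha hb hc; rewrite !K2 // opprK -[LHS]mulrN opprB. Qed.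
Lemma T_swap23 a b c : Lam a -> Lam b -> Lam c -> T a c b = - T a b c.
Proof. by move=> ha hb hc; rewrite T_swap12 T_rev // T_swap12 !opprK. Qed.

Lemma K5 x y z w : Lam x -> Lam y -> Lam z -> Lam w ->
  T y z w * x - T x z w * y + T x y w * z - T x y z * w = 0.
Proof.
move=> hx hy hz hw.
have g1 := GG hx hy hz hw.
have g2 := GG hy hx hw hz.
rewrite (T_swap23 hx hz hw) (T_swap12 x y w) !mulNr in g2.
have -> : T y z w * x - T x z w * y + T x y w * z - T x y z * w =
  (T y z w * x - T x y z * w) + (- (T x z w * y) - - (T x y w * z)) by asolve.
rewrite g1 g2 (sC w z) (sC y x).
have -> : forall A B C D E F : R, A - B + C - D + (E - C + B - F) = (A + E) - (D + F).
  by move=> *; asolve.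
rewrite -!mulrDr -!sE (cent_s hz hw (s x y)).
by rewrite subrr.
Qed.
Lemma L3 a b e : Lam a -> Lam b -> Lam e -> dot (br a b) e = dot a (br b e).
Proof.
move=> ha hb he.
have e1 : b*a*e = s a b * e - a*b*e by rewrite [b*a]acE mulrBl.
have e2 : e*a*b = s a e * b - a*e*b by rewrite [e*a]acE mulrBl.
have e3 : b*e*a = s a e * b - (s a b * e - a*b*e).
  by rewrite -mulrA [e*a]acE mulrBr -(cent_s ha he b) mulrA e1.
rewrite !dotE !sE !brE (cmul e _ cent_h) (cmul a _ cent_h) -!(mulrA h) -!mulrDr.
congr (_ * (h * _)).
rewrite !mulrBl !mulrBr !mulrA e1 e2 e3.
asolve.
Qed.

Lemma P3 a b c : Lam a -> Lam b -> Lam c ->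
  a*b*c - b*c*a = s a b * c - s a c * b.
Proof.
move=> ha hb hc.
have e1 : b*c*a = s a c * b - (s a b * c - a*b*c).
  by rewrite -mulrA [c*a]acE mulrBr -(cent_s ha hc b) mulrA [b*a]acE mulrBl.
rewrite e1; asolve.
Qed.

Lemma L4 b c d : Lam b -> Lam c -> Lam d ->
  br b (br c d) = dot b d * c - dot b c * d.
Proof.
move=> hb hc hd.
rewrite !brE (cmul b _ cent_h) -(mulrA h _ b) -mulrBr.
have -> : b * (c * d - d * c) - (c * d - d * c) * b =
   (s b c * d - s b d * c) + (s b c * d - s b d * c).
  rewrite mulrBr mulrBl !mulrA.
  have p1 := P3 hb hc hd.
  have p2 := P3 hb hd hc.
  have -> : b*c*d - b*d*c - (c*d*b - d*c*b) = (b*c*d - c*d*b) - (b*d*c - d*c*b)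
    by asolve.
  rewrite p1 p2; asolve.
rewrite halfE !dotE -!mulrA !mulNr mulrBr; asolve.
Qed.

Lemma BC p q u v : Lam p -> Lam q -> Lam u -> Lam v ->
  T p q (br u v) = dot q v * dot p u - dot q u * dot p v.
Proof.
move=> hp hq hu hv.
rewrite TE L3 //; last exact: Lam_br.
rewrite L4 // dotBr !dotZr //; exact: cent_dot.
Qed.
Lemma c3sw c1 c2 c3 : cent c1 -> c1 * c2 * c3 = c2 * c1 * c3.
Proof. by move=> h1; rewrite h1. Qed.
Lemma c3rot c1 c2 c3 : cent c1 -> c1 * c2 * c3 = c2 * c3 * c1.
Proof. by move=> h1; rewrite -mulrA h1. Qed.
Lemma c3rev c1 c2 c3 : cent c1 -> cent c3 -> c1 * c2 * c3 = c3 * c2 * c1.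
Proof. by move=> h1 h3; rewrite -h3 -mulrA h1. Qed.

Theorem part1 x y z w u : Lam x -> Lam y -> Lam z -> Lam w -> Lam u ->
  dot (br y z) w * dot x u - dot (br x z) w * dot y u
  + dot (br x y) w * dot z u - dot (br x y) z * dot w u = 0.
Proof.
move=> hx hy hz hw hu.
rewrite -!TE -(dotZl _ _ (cent_T hy hz hw)) -(dotZl _ _ (cent_T hx hz hw)).
rewrite -(dotZl _ _ (cent_T hx hy hw)) -(dotZl _ _ (cent_T hx hy hz)).
by rewrite -dotBl -dotDl -dotBl K5 // dot0l.
Qed.

Theorem part2 x y z u v w : Lam x -> Lam y -> Lam z -> Lam u -> Lam v -> Lam w ->
  dot (br x y) z * dot (br u v) w =
  dot x u * dot y v * dot z w + dot x v * dot y w * dot z u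
  + dot x w * dot y u * dot z v - dot x w * dot y v * dot z u
  - dot x u * dot y w * dot z v - dot x v * dot y u * dot z w.
Proof.
move=> hx hy hz hu hv hw.
have ha := Lam_br hu hv.
have k := K5 hx hy hz ha.
have k' := congr1 (fun t => dot t w) k; simpl in k'.
rewrite dot0l dotBl dotDl dotBl in k'.
rewrite (dotZl _ _ (cent_T hy hz ha)) (dotZl _ _ (cent_T hx hz ha)) in k'.
rewrite (dotZl _ _ (cent_T hx hy ha)) (dotZl _ _ (cent_T hx hy hz)) -TE in k'.
have E : T x y z * T u v w = T y z (br u v) * dot x w - T x z (br u v) * dot y w
   + T x y (br u v) * dot z w.
  by rewrite -[LHS]add0r -k'; asolve.
rewrite -!TE E !BC // !mulrBl.
have cd : forall p q, Lam p -> Lam q -> cent (dot p q) by move=> *; apply: cent_dot.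
rewrite (c3rev _ (cd _ _ hz hv) (cd _ _ hx hw)) (c3rev _ (cd _ _ hz hu) (cd _ _ hx hw)).
rewrite (c3rot _ _ (cd _ _ hz hv)) (c3rot _ _ (cd _ _ hz hu)).
rewrite (c3sw _ _ (cd _ _ hy hv)) (c3sw _ _ (cd _ _ hy hu)).
asolve.
Qed.
End Abstract.


Section PartA.
Variables (K : fieldType) (G : groupType).
Local Notation kG := (kG K G).
Implicit Types (f a b c d : kG).

Definition W (a : kG) (F : G -> K) : K := \sum_(p <- a) p.1 * F p.2.

Lemma W_nil F : W [::] F = 0. Proof. by rewrite /W big_nil. Qed.
Lemma W_cons p a F : W (p :: a) F = p.1 * F p.2 + W a F.
Proof. by rewrite /W big_cons. Qed.
Lemma W_cat a b F : W (a ++ b) F = W a F + W b F.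
Proof. by rewrite /W big_cat. Qed.
Lemma W_add a b F : W (kadd a b) F = W a F + W b F.
Proof. exact: W_cat. Qed.
Lemma W_scale k a F : W (kscale k a) F = k * W a F.
Proof. by rewrite /W big_map mulr_sumr; apply: eq_bigr => p _ /=; rewrite mulrA. Qed.
Lemma W_opp a F : W (kopp a) F = - W a F.
Proof. by rewrite /kopp W_scale mulN1r. Qed.
Lemma W_sub a b F : W (ksub a b) F = W a F - W b F.
Proof. by rewrite /ksub W_add W_opp. Qed.
Lemma W_mul a b F : W (kmul a b) F = W a (fun g => W b (fun h => F (g * h)%g)).
Proof.
rewrite /W /kmul big_allpairs_dep; apply: eq_bigr => p _.
by rewrite mulr_sumr; apply: eq_bigr => q _ /=; rewrite mulrA.
Qed.
Lemma W_star a F : W (kstar a) F = W a (fun g => F (g^-1)%g).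
Proof. by rewrite /W big_map. Qed.
Lemma W_ksum l F : W (ksum l) F = \sum_(x <- l) W x F.
Proof. by elim: l => [|x l IH]; rewrite ?big_nil ?big_cons /= ?W_nil // W_add IH. Qed.
Lemma W_ext a F1 F2 : F1 =1 F2 -> W a F1 = W a F2.
Proof. by move=> e; apply: eq_bigr => p _; rewrite e. Qed.

Lemma coefW a g : coef a g = W a (fun h => (h == g)%:R).
Proof.
rewrite /coef /W big_mkcond; apply: eq_bigr => p _.
by case: eqP => _; rewrite ?mulr1 ?mulr0.
Qed.

Lemma sum_pred1 (s : seq G) (x : G) (F : G -> K) :
  uniq s -> x \in s -> \sum_(g <- s | g == x) F g = F x.
Proof.
move=> us xs; rewrite -big_filter.
have -> : [seq g <- s | g == x] = [:: x] by exact: filter_pred1_uniq.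
by rewrite big_seq1.
Qed.

Lemma Wsupp a (s : seq G) F : uniq s -> {subset map snd a <= s} ->
  W a F = \sum_(g <- s) coef a g * F g.
Proof.
move=> us; elim: a => [|p a IH] sub.
  by rewrite W_nil; apply/esym/big1 => g _; rewrite /coef big_nil mul0r.
rewrite W_cons IH; last by move=> g ga; apply: sub; rewrite /= inE ga orbT.
have ps : p.2 \in s by apply: sub; rewrite /= inE eqxx.
rewrite [RHS](eq_bigr (fun g => (if g == p.2 then p.1 * F g else 0) + coef a g * F g)); last first.
  move=> g _; rewrite /coef big_cons; rewrite eq_sym.
  by case: eqP => [->|_]; rewrite ?add0r ?mulrDl.
rewrite big_split /=; congr (_ + _).
by rewrite -big_mkcond /= sum_pred1.
Qed.

Lemma keqW a b : keq a b -> forall F, W a F = W b F.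
Proof.
move=> e F; set s := undup (map snd (a ++ b)).
have us : uniq s by exact: undup_uniq.
rewrite (@Wsupp a s) // ?(@Wsupp b s) //.
- by apply: eq_bigr => g _; rewrite e.
- by move=> g gb; rewrite mem_undup map_cat mem_cat gb orbT.
- by move=> g ga; rewrite mem_undup map_cat mem_cat ga.
Qed.

Lemma Wkeq a b : (forall F, W a F = W b F) -> keq a b.
Proof. by move=> e g; rewrite !coefW e. Qed.
Lemma W_addF a X Y : W a (fun g => X g + Y g) = W a X + W a Y.
Proof. by rewrite /W -big_split; apply: eq_bigr => p _; rewrite mulrDr. Qed.
Lemma W_scaleF a k X : W a (fun g => k * X g) = k * W a X.
Proof. by rewrite /W mulr_sumr; apply: eq_bigr => p _; rewrite mulrCA. Qed.
Lemma W_oppF a X : W a (fun g => - X g) = - W a X.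
Proof. by rewrite -mulN1r -W_scaleF; apply: W_ext => g; rewrite mulN1r. Qed.
Lemma W_subF a X Y : W a (fun g => X g - Y g) = W a X - W a Y.
Proof. by rewrite W_addF W_oppF. Qed.
Lemma W_zeroF a : W a (fun g => 0) = 0.
Proof. by rewrite /W big1 // => p _; rewrite mulr0. Qed.

Definition weq (a b : kG) := forall F, W a F = W b F.

Lemma weq_keq a b : weq a b <-> keq a b.
Proof. by split; [exact: Wkeq | exact: keqW]. Qed.

Lemma kmulA_W a b c F : W (kmul (kmul a b) c) F = W (kmul a (kmul b c)) F.
Proof.
rewrite !W_mul; apply: W_ext => g; rewrite W_mul; apply: W_ext => h.
by apply: W_ext => k; rewrite mulgA.
Qed.

Lemma W_mul_l a a' b F : weq a a' -> W (kmul a b) F = W (kmul a' b) F.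
Proof. by move=> e; rewrite !W_mul e. Qed.
Lemma W_mul_r a b b' F : weq b b' -> W (kmul a b) F = W (kmul a b') F.
Proof. by move=> e; rewrite !W_mul; apply: W_ext => g; rewrite e. Qed.

Definition ione : kG := [:: (1, 1%g)].

Lemma W_one F : W ione F = F 1%g.
Proof. by rewrite W_cons W_nil mul1r addr0. Qed.

Lemma inI_weq f (g : kG) : weq f g -> inI f -> inI g.
Proof.
move=> e [s [hs hk]]; exists s; split => //.
by apply/weq_keq => F; rewrite -e; apply: keqW.
Qed.

Lemma inI0 : inI (kzero K G).
Proof. by exists [::]; split => // g. Qed.

Lemma inI_add f (g : kG) : inI f -> inI g -> inI (kadd f g).
Proof.
move=> [s [hs ek]] [t [ht ek']]; exists (s ++ t); split.
  by move=> q; rewrite mem_cat => /orP [] ?; [apply: hs | apply: ht].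
apply/weq_keq => F; move/weq_keq: ek => ek; move/weq_keq: ek' => ek'.
by rewrite W_add ek ek' !W_ksum map_cat big_cat.
Qed.

Lemma inI_lmul (h : kG) f : inI f -> inI (kmul h f).
Proof.
move=> [s [hs ek]].
exists (map (fun q => (kmul h q.1.1.1, q.1.1.2, q.1.2, q.2)) s); split.
  by move=> q /mapP [q' q's ->] /=; apply: hs.
apply/weq_keq => F; move/weq_keq: ek => ek.
rewrite (W_mul_r _ _ ek); clear ek; elim: s {hs} F => [|q s IH] F /=.
  by rewrite W_mul W_nil; under W_ext => g do rewrite W_nil; rewrite W_zeroF.
rewrite W_add -IH W_mul; under W_ext => g do rewrite W_add; rewrite W_addF -W_mul -W_mul.
congr (_ + _); case: q => [[[a c] d] b] /=.
by rewrite -kmulA_W; apply: W_mul_l => F'; rewrite kmulA_W.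
Qed.

Lemma inI_rmul (h : kG) f : inI f -> inI (kmul f h).
Proof.
move=> [s [hs ek]].
exists (map (fun q => (q.1.1.1, q.1.1.2, q.1.2, kmul q.2 h)) s); split.
  by move=> q /mapP [q' q's ->] /=; apply: hs.
apply/weq_keq => F; move/weq_keq: ek => ek.
rewrite (W_mul_l _ _ ek); clear ek; elim: s {hs} F => [|q s IH] F /=.
  by rewrite W_mul W_nil.
rewrite W_add -IH W_mul W_add -W_mul -W_mul.
congr (_ + _); case: q => [[[a c] d] b] /=.
by rewrite kmulA_W.
Qed.

Lemma inI_scale k f : inI f -> inI (kscale k f).
Proof.
move=> If; apply: (@inI_weq (kmul [:: (k, 1%g)] f)); last exact: inI_lmul.
move=> F; rewrite W_mul W_cons W_nil addr0 W_scale; congr (_ * _).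
by apply: W_ext => g; rewrite mul1g.
Qed.

Lemma inI_gen c d : selfadj d -> inI (ksub (kmul c d) (kmul d c)).
Proof.
move=> sd; exists [:: (ione, c, d, ione)]; split.
  by move=> q; rewrite inE => /eqP ->.
apply/weq_keq => F /=; rewrite W_add W_nil addr0 W_mul W_mul W_one.
by apply: W_ext => g; rewrite W_one mulg1 mul1g.
Qed.


End PartA.


Section Quot.
Variables (K : fieldType) (G : groupType).
Local Notation kG := (kG K G).
Implicit Types (a b c d e : kG).

Lemma eqA_weq a b : weq a b -> eqA a b.
Proof.
move=> e; apply: (@inI_weq _ _ (kzero K G)); last exact: inI0.
by move=> F; rewrite W_nil W_sub e subrr.
Qed.
Lemma eqA_refl a : eqA a a. Proof. exact: eqA_weq. Qed.
Lemma eqA_sym a b : eqA a b -> eqA b a.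
Proof.
move=> /(inI_scale (-1)); apply: inI_weq => F.
by rewrite W_scale !W_sub; ring.
Qed.
Lemma eqA_trans a b c : eqA a b -> eqA b c -> eqA a c.
Proof.
move=> h1 h2; have := inI_add h1 h2; apply: inI_weq => F.
by rewrite W_add !W_sub; ring.
Qed.
Lemma eqA_add a a' b b' : eqA a a' -> eqA b b' -> eqA (kadd a b) (kadd a' b').
Proof.
move=> h1 h2; have := inI_add h1 h2; apply: inI_weq => F.
by rewrite !(W_add, W_sub); ring.
Qed.
Lemma eqA_scale k a a' : eqA a a' -> eqA (kscale k a) (kscale k a').
Proof.
move=> /(inI_scale k); apply: inI_weq => F.
by rewrite !(W_scale, W_sub); ring.
Qed.
Lemma eqA_mul a a' b b' : eqA a a' -> eqA b b' -> eqA (kmul a b) (kmul a' b').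
Proof.
move=> h1 h2; have := inI_add (inI_rmul b h1) (inI_lmul a' h2); apply: inI_weq => F.
rewrite W_add W_sub !W_mul W_sub.
under [X in _ + X = _]W_ext => g do rewrite W_sub.
by rewrite W_subF; ring.
Qed.

Definition QA := {P : kG -> Prop | exists a, P = eqA a}.
HB.instance Definition _ := gen_eqMixin QA.
HB.instance Definition _ := gen_choiceMixin QA.

Definition qpi a : QA := exist _ (eqA a) (ex_intro _ a erefl).

Lemma qpiP a b : qpi a = qpi b <-> eqA a b.
Proof.
split.
  move=> /(congr1 sval) /= e; rewrite e; exact: eqA_refl.
move=> hab; apply: eq_sig_hprop => [x p q|]; first exact: Prop_irrelevance.
apply: funext => c /=; apply: propext; split => h.
  by apply: eqA_trans h; apply: eqA_sym.
exact: eqA_trans h.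
Qed.

Definition qrepr (q : QA) : kG := sval (cid (svalP q)).
Lemma qreprK q : qpi (qrepr q) = q.
Proof.
rewrite /qrepr; case: cid => a /= e.
by apply: eq_sig_hprop => [x p p'|]; [exact: Prop_irrelevance | rewrite /= -e].
Qed.
Lemma eqA_repr a : eqA (qrepr (qpi a)) a.
Proof. by apply/qpiP; rewrite qreprK. Qed.

Definition qzero := qpi (kzero K G).
Definition qone := qpi (ione K G).
Definition qadd p q := locked (qpi (kadd (qrepr p) (qrepr q))).
Definition qopp p := locked (qpi (kopp (qrepr p))).
Definition qmul p q := locked (qpi (kmul (qrepr p) (qrepr q))).

Lemma qpi_add a b : qpi (kadd a b) = qadd (qpi a) (qpi b).
Proof. by rewrite /qadd -lock; apply/qpiP; apply: eqA_add; apply: eqA_sym; apply: eqA_repr. Qed.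
Lemma qpi_opp a : qpi (kopp a) = qopp (qpi a).
Proof. by rewrite /qopp -lock; apply/qpiP; apply: eqA_scale; apply: eqA_sym; apply: eqA_repr. Qed.
Lemma qpi_mul a b : qpi (kmul a b) = qmul (qpi a) (qpi b).
Proof. by rewrite /qmul -lock; apply/qpiP; apply: eqA_mul; apply: eqA_sym; apply: eqA_repr. Qed.

Lemma qpiW a b : weq a b -> qpi a = qpi b.
Proof. by move=> e; apply/qpiP/eqA_weq. Qed.

Lemma qaddA : associative qadd.
Proof.
move=> p q r; rewrite -(qreprK p) -(qreprK q) -(qreprK r) -!qpi_add.
by apply: qpiW => F; rewrite !W_add addrA.
Qed.
Lemma qaddC : commutative qadd.
Proof.
move=> p q; rewrite -(qreprK p) -(qreprK q) -!qpi_add.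
by apply: qpiW => F; rewrite !W_add addrC.
Qed.
Lemma qadd0 : left_id qzero qadd.
Proof.
move=> p; rewrite -(qreprK p) /qzero -!qpi_add.
by apply: qpiW => F; rewrite !W_add W_nil add0r.
Qed.
Lemma qaddN : left_inverse qzero qopp qadd.
Proof.
move=> p; rewrite -(qreprK p) /qzero -qpi_opp -!qpi_add.
by apply: qpiW => F; rewrite !W_add W_opp W_nil addNr.
Qed.
Lemma qmulA : associative qmul.
Proof.
move=> p q r; rewrite -(qreprK p) -(qreprK q) -(qreprK r) -!qpi_mul.
by apply: qpiW => F; rewrite kmulA_W.
Qed.
Lemma qmul1 : left_id qone qmul.
Proof.
move=> p; rewrite -(qreprK p) /qone -!qpi_mul.
by apply: qpiW => F; rewrite W_mul W_one; apply: W_ext => g; rewrite mul1g.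
Qed.
Lemma qmulr1 : right_id qone qmul.
Proof.
move=> p; rewrite -(qreprK p) /qone -!qpi_mul.
by apply: qpiW => F; rewrite W_mul; apply: W_ext => g; rewrite W_one mulg1.
Qed.
Lemma qmulDl : left_distributive qmul qadd.
Proof.
move=> p q r; rewrite -(qreprK p) -(qreprK q) -(qreprK r) -!qpi_mul -!qpi_add -qpi_mul.
by apply: qpiW => F; rewrite W_mul !W_add !W_mul.
Qed.
Lemma qmulDr : right_distributive qmul qadd.
Proof.
move=> p q r; rewrite -(qreprK p) -(qreprK q) -(qreprK r) -!qpi_mul -!qpi_add -qpi_mul.
apply: qpiW => F; rewrite W_mul !W_add !W_mul -W_addF.
by apply: W_ext => g; rewrite W_add.
Qed.

HB.instance Definition _ := @GRing.isPzRing.Build QA qzero qopp qadd qone qmul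
  qaddA qaddC qadd0 qaddN qmulA qmul1 qmulr1 qmulDl qmulDr.

End Quot.


Section Transfer.
Variables (K : fieldType) (G : groupType).
Hypothesis charK0 : [pchar K] =i pred0.
Local Notation kG := (kG K G).
Local Notation QA := (QA K G).
Local Notation qpi := (@qpi K G).
Implicit Types (a b c d e : kG).

Lemma pi0 : qpi (kzero K G) = 0. Proof. by []. Qed.
Lemma pi1 : qpi (ione K G) = 1. Proof. by []. Qed.
Lemma piD a b : qpi (kadd a b) = qpi a + qpi b. Proof. exact: qpi_add. Qed.
Lemma piN a : qpi (kopp a) = - qpi a. Proof. exact: qpi_opp. Qed.
Lemma piM a b : qpi (kmul a b) = qpi a * qpi b. Proof. exact: qpi_mul. Qed.
Lemma piB a b : qpi (ksub a b) = qpi a - qpi b. Proof. by rewrite /ksub piD piN. Qed.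

Definition kap (k : K) : QA := qpi [:: (k, 1%g)].

Lemma W_single (k : K) (g : G) F : W [:: (k, g)] F = k * F g.
Proof. by rewrite W_cons W_nil addr0. Qed.

Lemma piZ k a : qpi (kscale k a) = kap k * qpi a.
Proof.
rewrite /kap -piM; apply: qpiW => F; rewrite W_scale W_mul W_single.
by congr (_ * _); apply: W_ext => g; rewrite mul1g.
Qed.
Lemma kap_cent k (r : QA) : kap k * r = r * kap k.
Proof.
rewrite -(qreprK r) /kap -!piM; apply: qpiW => F; rewrite !W_mul W_single.
rewrite -W_scaleF; apply: W_ext => g; rewrite W_single.
by rewrite mul1g mulg1.
Qed.
Lemma kapN k : kap (- k) = - kap k.
Proof. by rewrite /kap -piN; apply: qpiW => F; rewrite W_opp !W_single mulNr. Qed.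

Lemma two_neq0 : (2%:R : K) != 0.
Proof. by have := (pcharf0P K).1 charK0 2 => ->. Qed.

Lemma kap_half : kap (1 / 2%:R) * 2%:R = 1.
Proof.
have -> : (2%:R : QA) = 1 + 1 by rewrite mulr2n.
rewrite -pi1 -piD /kap -piM; apply: qpiW => F.
rewrite W_mul W_single W_add !W_one !mul1g.
by rewrite -mulr2n -[F 1%g *+ 2]mulr_natl mulrA div1r mulVf ?mul1r // two_neq0.
Qed.

Lemma half_twice (x : QA) : kap (1 / 2%:R) * (x + x) = x.
Proof. by rewrite -mulr2n -[x *+ 2]mulr_natl mulrA kap_half mul1r. Qed.

Lemma W_exch a b (X : G -> G -> K) :
  W a (fun g => W b (fun h => X g h)) = W b (fun h => W a (fun g => X g h)).
Proof.
rewrite /W.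
under eq_bigr => p _ do rewrite mulr_sumr.
rewrite exchange_big /=; apply: eq_bigr => q _; rewrite mulr_sumr.
by apply: eq_bigr => p _; rewrite mulrCA.
Qed.

Lemma piS_mul a b : qpi (kstar (kmul a b)) = qpi (kstar b) * qpi (kstar a).
Proof.
rewrite -piM; apply: qpiW => F; rewrite W_star !W_mul W_star.
rewrite W_exch; apply: W_ext => h; rewrite W_star; apply: W_ext => g.
by rewrite invgM.
Qed.
Lemma piS_add a b : qpi (kstar (kadd a b)) = qpi (kstar a) + qpi (kstar b).
Proof. by rewrite -piD /kstar /kadd map_cat. Qed.
Lemma piS_scale k a : qpi (kstar (kscale k a)) = kap k * qpi (kstar a).
Proof. by rewrite -piZ; congr qpi; rewrite /kstar /kscale -!map_comp; apply: eq_map. Qed.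
Lemma piS_opp a : qpi (kstar (kopp a)) = - qpi (kstar a).
Proof. by rewrite /kopp piS_scale kapN mulNr (_ : kap 1 = 1) // mul1r. Qed.
Lemma piS_sub a b : qpi (kstar (ksub a b)) = qpi (kstar a) - qpi (kstar b).
Proof. by rewrite /ksub piS_add piS_opp. Qed.

Lemma dummy_unused : True. Proof. by []. Qed.
Lemma piLam a : inLambda a -> qpi (kstar a) = - qpi a.
Proof. by move=> h; rewrite -piN; apply/qpiP. Qed.

Definition hh : QA := kap (1 / 2%:R).
Definition LamQ (q : QA) := exists a, q = qpi a /\ inLambda a.

Lemma hhC (r : QA) : hh * r = r * hh. Proof. exact: kap_cent. Qed.
Lemma hh2 : hh * 2%:R = 1. Proof. exact: kap_half. Qed.

Lemma HLQ (p q : QA) : LamQ p -> LamQ q -> forall r, (p * q + q * p) * r = r * (p * q + q * p).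
Proof.
move=> [a [-> ha]] [b [-> hb]] r; rewrite -(qreprK r); set c := qrepr r.
have sd0 : forall d : kG, selfadj (kscale (1 / 2%:R) (kadd d (kstar d))).
  move=> d; apply/weq_keq => F; rewrite W_star !W_scale !W_add.
  have -> : W (kstar d) (fun g => F g^-1%g) = W d F.
    by rewrite W_star; apply: W_ext => g; rewrite invgK.
  by rewrite -W_star addrC.
pose d := kadd (kmul a b) (kmul b a).
pose e := kscale (1 / 2%:R) (kadd d (kstar d)).
have sd : selfadj e by exact: sd0.
have ge := inI_gen c sd.
have pe : qpi e = qpi a * qpi b + qpi b * qpi a.
  rewrite /e piZ piD piS_add !piS_mul !piLam // /d piD !piM !mulrNN.
  by rewrite [qpi b * qpi a + _]addrC half_twice.
rewrite -pe -!piM; apply/qpiP; apply: eqA_sym; exact: ge.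
Qed.

Lemma pi_br a b : qpi (kbr a b) = br hh (qpi a) (qpi b).
Proof. by rewrite brE /kbr piZ piB !piM. Qed.
Lemma pi_dot a b : qpi (kdot a b) = dot hh (qpi a) (qpi b).
Proof. by rewrite dotE sE /kdot piZ kapN piD !piM. Qed.

Lemma inLambda_br a b : inLambda a -> inLambda b -> inLambda (kbr a b).
Proof.
move=> ha hb; apply/qpiP; rewrite piN /kbr piS_scale piS_sub !piS_mul !piLam //.
by rewrite piZ piB !piM !mulrNN -[RHS]mulrN opprB.
Qed.

Lemma HBQ (p q : QA) : LamQ p -> LamQ q -> LamQ (hh * (p * q - q * p)).
Proof.
move=> [a [-> ha]] [b [-> hb]]; exists (kbr a b); split.
  by rewrite pi_br brE.
exact: inLambda_br.
Qed.

End Transfer.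


Unset Implicit Arguments.
Lemma sum4 (V : zmodType) (A B C D : V) :
  A - B + C - D = 0 -> A + (- B + (C + (- D + 0))) = 0.
Proof. by rewrite addr0 !addrA. Qed.

Lemma sum6 (V : zmodType) (X A B C D E F : V) :
  X = A + B + C - D - E - F -> X = A + (B + (C + (- D + (- E + (- F + 0))))).
Proof. by rewrite addr0 !addrA. Qed.

Theorem mainTheorem8 (K : fieldType) (G : groupType)
  (charK0 : [pchar K] =i pred0)
  (x y z u v w : kG K G) :
  inLambda x -> inLambda y -> inLambda z ->
  inLambda u -> inLambda v -> inLambda w ->
  eqA
    (ksum [:: kmul (kdot (kbr y z) w) (kdot x u);
              kopp (kmul (kdot (kbr x z) w) (kdot y u));
              kmul (kdot (kbr x y) w) (kdot z u);
              kopp (kmul (kdot (kbr x y) z) (kdot w u))])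
    (kzero K G)
  /\
  eqA (kmul (kdot (kbr x y) z) (kdot (kbr u v) w))
      (kdet3 (kdot x u) (kdot x v) (kdot x w)
             (kdot y u) (kdot y v) (kdot y w)
             (kdot z u) (kdot z v) (kdot z w)).
Proof.
move=> hx hy hz hu hv hw.
have L : forall a : kG K G, inLambda a -> LamQ (qpi a) by move=> a ha; exists a.
have hC := @hhC K G.
have h2 := @hh2 K G charK0.
have HL := @HLQ K G charK0.
have HB := @HBQ K G.
have pS : forall (a : kG K G) l, qpi (ksum (a :: l)) = qpi a + qpi (ksum l).
  by move=> a l; exact: piD.
have p0 : qpi (ksum (@nil (kG K G))) = 0 by [].
split.
  apply/qpiP. rewrite !pS. rewrite p0. rewrite !piN. rewrite !piM. rewrite !pi_dot. rewrite !pi_br. 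
  apply: sum4.
  exact: (part1 hC h2 HL HB (L _ hx) (L _ hy) (L _ hz) (L _ hw) (L _ hu)).
apply/qpiP; rewrite /kdet3 !pS p0 !piN !piM !pi_dot !pi_br.
apply: sum6.
exact: (part2 hC h2 HL HB (L _ hx) (L _ hy) (L _ hz) (L _ hu) (L _ hv) (L _ hw)).
Qed.
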